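(* Let $W:\mathbb{N}^\star\times\mathbb{N}^\star\to\mathbb{C}$. Then $(\mathbb{M},\square_W,\times)$ is a commutative ring (with $\square_W$ as addition and pointwise product $\times$ as multiplication) if and only if $W(a,b)=1$ when $\gcd(a,b)=1$ and $W(a,b)=0$ otherwise.
   Context: $\mathbb{M}$ is the set of functions $F:\mathbb{N}^\star\to\mathbb{C}$ with $F(1)=1$ and $F(ab)=F(a)F(b)$ whenever $\gcd(a,b)=1$. For a weight $W$, $(F\,\square_W\,G)(m)=\sum_{ab=m}F(a)G(b)W(a,b)$, and $(F\times G)(m)=F(m)G(m)$. Being a commutative ring includes that both operations map $\mathbb{M}\times\mathbb{M}$ into $\mathbb{M}$. *)

(* Defs.v *)
From HB Require Import structures.
From mathcomp Require Import all_boot all_order all_algebra.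
Set Implicit Arguments. Unset Strict Implicit. Unset Printing Implicit Defensive.
Import Order.TTheory GRing.Theory Num.Theory.
Local Open Scope ring_scope.

Section Defs.
Variable C : numClosedFieldType.

(* Arithmetic functions N* -> C are modelled as nat -> C; the value at 0 is
   irrelevant, and equality of arithmetic functions is equality on N*. *)
Definition feq (F G : nat -> C) : Prop := forall m, (0 < m)%N -> F m = G m.

Definition mult_fun (F : nat -> C) : Prop :=
  F 1%N = 1 /\
  forall a b : nat, (0 < a)%N -> (0 < b)%N -> coprime a b -> F (a * b)%N = F a * F b.

Definition wconv (W : nat -> nat -> C) (F G : nat -> C) : nat -> C :=
  fun m => \sum_(d <- divisors m) F d * G (m %/ d)%N * W d (m %/ d)%N.

Definition pmul (F G : nat -> C) : nat -> C := fun m => F m * G m.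

Definition is_comm_ring (P : (nat -> C) -> Prop)
    (add mul : (nat -> C) -> (nat -> C) -> (nat -> C)) : Prop :=
  (forall F G, P F -> P G -> P (add F G)) /\
  (forall F G, P F -> P G -> P (mul F G)) /\
  (forall F G H, P F -> P G -> P H -> feq (add F (add G H)) (add (add F G) H)) /\
  (forall F G, P F -> P G -> feq (add F G) (add G F)) /\
  (exists Z, P Z /\
     (forall F, P F -> feq (add Z F) F) /\
     (forall F, P F -> exists G, P G /\ feq (add F G) Z)) /\
  (forall F G H, P F -> P G -> P H -> feq (mul F (mul G H)) (mul (mul F G) H)) /\
  (forall F G, P F -> P G -> feq (mul F G) (mul G F)) /\
  (exists U, P U /\ forall F, P F -> feq (mul U F) F) /\
  (forall F G H, P F -> P G -> P H ->
     feq (mul F (add G H)) (add (mul F G) (mul F H))).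

End Defs.

(* Main.v *)
Require Import Defs.
From HB Require Import structures.
From mathcomp Require Import all_boot all_order all_algebra.
From mathcomp Require Import ring zify.
Import Order.TTheory GRing.Theory Num.Theory.
Local Open Scope ring_scope.
Set Implicit Arguments. Unset Strict Implicit.

Lemma sum_single (C : numClosedFieldType) (s : seq nat) (x : nat) (f : nat -> C) :
  uniq s -> x \in s -> (forall y, y \in s -> y != x -> f y = 0) ->
  \sum_(y <- s) f y = f x.
Proof.
move=> us xs H; rewrite (bigD1_seq x) //= big1_seq ?addr0 // => y /andP[yx ys].
exact: H.
Qed.

Lemma sum_two (C : numClosedFieldType) (s : seq nat) (x1 x2 : nat) (f : nat -> C) :
  uniq s -> x1 \in s -> x2 \in s -> x1 != x2 ->
  (forall y, y \in s -> y != x1 -> y != x2 -> f y = 0) ->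
  \sum_(y <- s) f y = f x1 + f x2.
Proof.
move=> us x1s x2s ne H; rewrite (bigD1_seq x1) //=; congr (_ + _).
rewrite -big_filter; apply: sum_single.
- exact: filter_uniq.
- by rewrite mem_filter eq_sym ne.
- move=> y; rewrite mem_filter => /andP[y1 ys] y2; exact: H.
Qed.

Definition one_f (C : numClosedFieldType) : nat -> C := fun _ => 1.
Definition eps_f (C : numClosedFieldType) : nat -> C := fun n => if n == 1%N then 1 else 0.
Definition dind (C : numClosedFieldType) (a : nat) : nat -> C :=
  fun n => if (n %| a)%N then 1 else 0.
Definition lfun (C : numClosedFieldType) (p k : nat) : nat -> C :=
  fun n => if (logn p n == 0%N) || (logn p n == k) then 1 else 0.

Lemma one_mult C : mult_fun (one_f C).
Proof. by split => // *; rewrite /one_f mulr1. Qed.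

Lemma eps_mult C : mult_fun (eps_f C).
Proof.
split => [|a b a0 b0 _]; first by rewrite /eps_f.
rewrite /eps_f muln_eq1; case: (a == 1%N); case: (b == 1%N); by rewrite ?mulr0 ?mulr1.
Qed.

Lemma dind_mult C a : mult_fun (dind C a).
Proof.
split => [|x y x0 y0 cxy]; first by rewrite /dind dvd1n.
rewrite /dind Gauss_dvd //; case: (x %| a)%N; case: (y %| a)%N; by rewrite ?mulr0 ?mulr1.
Qed.

Lemma lfun_mult C p k : prime p -> mult_fun (lfun C p k).
Proof.
move=> pp; split => [|x y x0 y0 cxy]; first by rewrite /lfun logn1.
rewrite /lfun lognM //.
have : (logn p x == 0%N) || (logn p y == 0%N).
  case: (posnP (logn p x)) => [//|]; case: (posnP (logn p y)) => [|]; first by rewrite orbT.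
  rewrite !logn_gt0 !mem_primes => /and3P[_ _ py] /and3P[_ _ px].
  have : (p %| gcdn x y)%N by rewrite dvdn_gcd px py.
  by rewrite (eqP cxy) dvdn1 => /eqP p1; move: pp; rewrite p1.
case/orP => /eqP ->; rewrite ?add0n ?addn0 eqxx /= ?mul1r ?mulr1 //.
Qed.

Lemma pmul_mult (C : numClosedFieldType) (F G : nat -> C) : mult_fun F -> mult_fun G -> mult_fun (pmul F G).
Proof.
move=> [F1 FM] [G1 GM]; split => [|x y x0 y0 c]; first by rewrite /pmul F1 G1 mulr1.
by rewrite /pmul FM // GM // mulrACA.
Qed.

Lemma wconv_eps_l (C : numClosedFieldType) W (F : nat -> C) n : (0 < n)%N ->
  wconv W (eps_f C) F n = F n * W 1%N n.
Proof.
move=> n0; rewrite /wconv (sum_single (x:=1%N)) ?divisors_uniq ?divisor1 //.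
  by rewrite /eps_f eqxx divn1 mul1r.
by move=> y _ y1; rewrite /eps_f (negbTE y1) !mul0r.
Qed.

Lemma wconv_eps_r (C : numClosedFieldType) W (F : nat -> C) n : (0 < n)%N ->
  wconv W F (eps_f C) n = F n * W n 1%N.
Proof.
move=> n0; rewrite /wconv (sum_single (x:=n)) ?divisors_uniq ?divisors_id //.
  by rewrite /eps_f divnn n0 eqxx mulr1.
move=> y; rewrite -dvdn_divisors // => yn yNn; rewrite /eps_f.
case: eqP => [h|]; last by rewrite mulr0 mul0r.
have e : n = y by rewrite -[LHS](divnK yn) h mul1n.
by move: yNn; rewrite e eqxx.
Qed.

Lemma wconv_support (C : numClosedFieldType) W (F G : nat -> C) a b :
  (0 < a)%N -> (0 < b)%N -> (forall n, ~~ (n %| a)%N -> F n = 0) ->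
  (forall n, ~~ (n %| b)%N -> G n = 0) ->
  wconv W F G (a * b) = F a * G b * W a b.
Proof.
move=> a0 b0 hF hG; have ab0 : (0 < a * b)%N by rewrite muln_gt0 a0.
rewrite /wconv (sum_single (x:=a)) ?divisors_uniq -?dvdn_divisors ?dvdn_mulr //.
  by rewrite mulKn.
move=> y; rewrite -dvdn_divisors // => yab yNa.
case ya: (y %| a)%N; last by rewrite hF ?ya // !mul0r.
case yb: ((a * b) %/ y %| b)%N; last by rewrite (hG _ (negbT yb)) mulr0 mul0r.
exfalso; move/dvdnP: ya => [k ak].
have y0 : (0 < y)%N by move: a0; rewrite ak muln_gt0 => /andP[].
have k0 : (0 < k)%N by move: a0; rewrite ak muln_gt0 => /andP[].
move: yb; rewrite ak -mulnA [(y * b)%N]mulnC mulnA mulnK // => /(dvdn_leq b0) kb.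
have k1 : k = 1%N by nia.
by move: yNa; rewrite ak k1 mul1n eqxx.
Qed.

Lemma wconv_support_a (C : numClosedFieldType) W (F G : nat -> C) a b :
  (0 < a)%N -> coprime a b -> (forall n, ~~ (n %| a)%N -> F n = 0) ->
  (forall n, ~~ (n %| b)%N -> G n = 0) ->
  wconv W F G a = F a * G 1%N * W a 1%N.
Proof.
move=> a0 cab hF hG.
rewrite /wconv (sum_single (x:=a)) ?divisors_uniq ?divisors_id //.
  by rewrite divnn a0.
move=> y; rewrite -dvdn_divisors // => ya yNa.
case yb: (a %/ y %| b)%N; last by rewrite (hG _ (negbT yb)) mulr0 mul0r.
exfalso; move/negP: yNa; apply; apply/eqP.
have h1 : (a %/ y %| a)%N by rewrite -{2}(divnK ya) dvdn_mulr.
have : (a %/ y %| gcdn a b)%N by rewrite dvdn_gcd h1 yb.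
rewrite (eqP cab) dvdn1 => /eqP h.
by rewrite -(divnK ya) h mul1n.
Qed.

Lemma wconv_support_b (C : numClosedFieldType) W (F G : nat -> C) a b :
  (0 < b)%N -> coprime a b -> (forall n, ~~ (n %| a)%N -> F n = 0) ->
  wconv W F G b = F 1%N * G b * W 1%N b.
Proof.
move=> b0 cab hF.
rewrite /wconv (sum_single (x:=1%N)) ?divisors_uniq ?divisor1 //.
  by rewrite divn1.
move=> y; rewrite -dvdn_divisors // => yb yN1.
case ya: (y %| a)%N; last by rewrite hF ?ya // !mul0r.
have : (y %| gcdn a b)%N by rewrite dvdn_gcd ya yb.
by rewrite (eqP cab) dvdn1 (negbTE yN1).
Qed.

Lemma forward (C : numClosedFieldType) (W : nat -> nat -> C) :
  is_comm_ring (@mult_fun C) (wconv W) (@pmul C) ->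
  forall a b : nat, (0 < a)%N -> (0 < b)%N ->
     W a b = (if coprime a b then 1 else 0).
Proof.
case=> cl_add [cl_mul [assoc [comm [[Z [PZ [Zid Zinv]]] [massoc [mcomm [[U [PU Uid]] distr]]]]]]].
have W11 : W 1%N 1%N = 1.
  have [h _] := cl_add _ _ (one_mult C) (one_mult C).
  move: h; rewrite /wconv.
  have -> : divisors 1 = [:: 1%N] by [].
  by rewrite big_seq1 /one_f !mul1r.
have Wsym : forall n, (0 < n)%N -> W n 1%N = W 1%N n.
  move=> n n0; have := comm _ _ (one_mult C) (eps_mult C) n n0.
  by rewrite wconv_eps_r // wconv_eps_l // /one_f !mul1r.
have Zd : forall d, (1 < d)%N -> Z d * W d 1%N = 0.
  move=> d d1; have := Zid _ (eps_mult C) d (ltnW d1).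
  rewrite wconv_eps_r ?(ltnW d1) // => ->.
  by rewrite /eps_f gtn_eqF.
have W1n : forall n, (0 < n)%N -> W 1%N n = 1.
  move=> n; elim: n {-2}n (leqnn n) => [|N IH] n lenN n0; first by lia.
  case: (eqVneq n 1%N) => [->//|n1].
  have n1' : (1 < n)%N by lia.
  have := Zid _ (one_mult C) n n0.
  rewrite /wconv (sum_two (x1:=1%N) (x2:=n)) ?divisors_uniq ?divisor1 ?divisors_id //.
  - rewrite divn1 divnn n0 /one_f PZ.1 !mul1r mulr1 Zd // addr0 => ->//.
  - by rewrite eq_sym.
  move=> y; rewrite -dvdn_divisors // => yn y1 yN.
  have y0 : (0 < y)%N by apply: dvdn_gt0 yn.
  have yle : (y <= n)%N by apply: dvdn_leq.
  have y1' : (1 < y)%N by lia.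
  have Wy : W 1%N y = 1 by apply: IH => //; lia.
  have := Zd y y1'; rewrite Wsym // Wy.
  by rewrite /one_f mulr1 => ->; rewrite !mul0r.
move=> a b a0 b0; case: ifP => cab.
- have [_ h] := cl_add _ _ (dind_mult C a) (dind_mult C b).
  have := h a b a0 b0 cab.
  have sa : forall n, ~~ (n %| a)%N -> dind C a n = 0 by move=> n /negbTE; rewrite /dind => ->.
  have sb : forall n, ~~ (n %| b)%N -> dind C b n = 0 by move=> n /negbTE; rewrite /dind => ->.
  rewrite wconv_support // (@wconv_support_a _ W _ _ a b) // (@wconv_support_b _ W _ _ a b) //.
  by rewrite /dind !dvdnn !dvd1n !mul1r Wsym // !W1n // mulr1.
- have g0 : (0 < gcdn a b)%N by rewrite gcdn_gt0 a0.
  have g1 : (1 < gcdn a b)%N by move: cab; rewrite /coprime; lia.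
  set p := pdiv (gcdn a b).
  have pp : prime p by apply: pdiv_prime.
  have pa : (p %| a)%N by apply: dvdn_trans (pdiv_dvd _) (dvdn_gcdl _ _).
  have pb : (p %| b)%N by apply: dvdn_trans (pdiv_dvd _) (dvdn_gcdr _ _).
  have la : (0 < logn p a)%N by rewrite logn_gt0 mem_primes pp a0 pa.
  have lb : (0 < logn p b)%N by rewrite logn_gt0 mem_primes pp b0 pb.
  set k := logn p (a * b).
  have kE : k = (logn p a + logn p b)%N by rewrite /k lognM.
  have ab0 : (0 < a * b)%N by rewrite muln_gt0 a0.
  have := distr _ _ _ (lfun_mult C k pp) (dind_mult C a) (dind_mult C b) _ ab0.
  have sa : forall n, ~~ (n %| a)%N -> dind C a n = 0 by move=> n /negbTE; rewrite /dind => ->.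
  have sb : forall n, ~~ (n %| b)%N -> dind C b n = 0 by move=> n /negbTE; rewrite /dind => ->.
  rewrite /pmul wconv_support //.
  rewrite wconv_support //; try (by move=> n /sa ->; rewrite mulr0);
    try (by move=> n /sb ->; rewrite mulr0).
  rewrite /dind !dvdnn !mulr1 !mul1r.
  have -> : lfun C p k (a * b) = 1 by rewrite /lfun -/k eqxx orbT.
  have -> : lfun C p k a = 0.
    rewrite /lfun; case: ifP => //; rewrite kE; lia.
  by rewrite mul1r !mul0r.
Qed.

Definition sgnf (C : numClosedFieldType) : nat -> C := fun n => (-1) ^+ size (primes n).

Lemma sgn_mult C : mult_fun (sgnf C).
Proof.
split => [|a b a0 b0 cab]; first by rewrite /sgnf.
rewrite /sgnf -exprD -size_cat; congr (_ ^+ _); apply: perm_size.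
apply: uniq_perm; first exact: primes_uniq.
  rewrite cat_uniq !primes_uniq /= andbT; apply/hasPn => p pb; apply/negP => pa.
  move: pa pb; rewrite !mem_primes => /and3P[pp _ pa] /and3P[_ _ pb].
  have : (p %| gcdn a b)%N by rewrite dvdn_gcd pa pb.
  by rewrite (eqP cab) dvdn1 => /eqP p1; move: pp; rewrite p1.
by move=> p; rewrite primesM // mem_cat.
Qed.

Lemma sgn_pp C p k : prime p -> (0 < k)%N -> sgnf C (p ^ k)%N = -1.
Proof. by move=> pp k0; rewrite /sgnf primesX // primes_prime. Qed.

Lemma mult_ext (C : numClosedFieldType) (F G : nat -> C) : mult_fun F -> mult_fun G ->
  (forall p k, prime p -> (0 < k)%N -> F (p ^ k)%N = G (p ^ k)%N) -> feq F G.
Proof.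
move=> [F1 FM] [G1 GM] H m; elim: m {-2}m (leqnn m) => [|N IH] m lem m0; first by lia.
case: (eqVneq m 1%N) => [->|m1]; first by rewrite F1 G1.
have m1' : (1 < m)%N by lia.
set p := pdiv m.
have pp : prime p := pdiv_prime m1'.
have pm : (p %| m)%N := pdiv_dvd m.
have lp : (0 < logn p m)%N by rewrite logn_gt0 mem_primes pp m0 pm.
have mE : (m`_p * m`_p^')%N = m by rewrite partnC.
have cp : (coprime m`_p m`_p^')%N := coprime_partC _ _ _.
have ap : (m`_p = p ^ logn p m)%N := p_part _ _.
case: (eqVneq (m`_p^')%N 1%N) => [b1|b1].
  by rewrite -mE b1 muln1 ap H.
have b1' : (1 < m`_p^')%N by have := part_gt0 p^' m; lia.
have a1 : (1 < m`_p)%N by rewrite p_part_gt1 mem_primes pp m0 pm.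
have ha : (m`_p <= N)%N by nia.
have hb : (m`_p^' <= N)%N by nia.
rewrite -mE FM ?part_gt0 // GM ?part_gt0 // !IH // part_gt0.
Qed.

Lemma mult_pos (C : numClosedFieldType) (F G : nat -> C) : mult_fun F ->
  (forall m, (0 < m)%N -> F m = G m) -> mult_fun G.
Proof.
move=> [F1 FM] e; split; first by rewrite -e.
move=> a b a0 b0 c; rewrite -!e ?muln_gt0 ?a0 //; exact: FM.
Qed.

Lemma div_allpairs a b : (0 < a)%N -> (0 < b)%N -> coprime a b ->
  perm_eq (divisors (a * b)) [seq (d1 * d2)%N | d1 <- divisors a, d2 <- divisors b].
Proof.
move=> a0 b0 cab; have ab0 : (0 < a * b)%N by rewrite muln_gt0 a0.
apply: uniq_perm; first exact: divisors_uniq.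
  apply: allpairs_uniq; try exact: divisors_uniq.
  move=> [x1 y1] [x2 y2] /allpairsP[[u1 v1] [/= hu1 hv1 [-> ->]]].
  move=> /allpairsP[[u2 v2] [/= hu2 hv2 [-> ->]]] /= e.
  move: hu1 hv1 hu2 hv2; rewrite -!dvdn_divisors // => hu1 hv1 hu2 hv2.
  have gu : forall u v, (u %| a)%N -> (v %| b)%N -> gcdn a (u * v) = u.
    move=> u v hu hv; rewrite Gauss_gcdl; first exact/gcdn_idPr.
    exact: coprime_dvdr hv cab.
  have gv : forall u v, (u %| a)%N -> (v %| b)%N -> gcdn b (u * v) = v.
    move=> u v hu hv; rewrite Gauss_gcdr; first exact/gcdn_idPr.
    by rewrite coprime_sym; apply: coprime_dvdl hu cab.
  have eu : u1 = u2 by rewrite -(gu _ _ hu1 hv1) e gu.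
  have ev : v1 = v2 by rewrite -(gv _ _ hu1 hv1) e gv.
  by rewrite eu ev.
move=> d; rewrite -dvdn_divisors //; apply/idP/allpairsP.
- move=> hd; exists (gcdn d a, gcdn d b); rewrite /= -!dvdn_divisors //.
  rewrite !dvdn_gcdr; split => //; apply/eqP; rewrite eqn_dvd; apply/andP; split.
  + rewrite muln_gcdl dvdn_gcd dvdn_mulr //= muln_gcdr dvdn_gcd hd andbT.
    exact: dvdn_mull.
  + rewrite Gauss_dvd ?dvdn_gcdl //.
    by apply: (coprime_dvdl (dvdn_gcdr _ _)); apply: (coprime_dvdr (dvdn_gcdr _ _)).
- move=> [[u v] [/= hu hv ->]]; move: hu hv; rewrite -!dvdn_divisors // => hu hv.
  exact: dvdn_mul.
Qed.

Lemma conv_mult (C : numClosedFieldType) (W : nat -> nat -> C) (F G : nat -> C) :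
  (forall a b : nat, (0 < a)%N -> (0 < b)%N -> W a b = (if coprime a b then 1 else 0)) ->
  mult_fun F -> mult_fun G -> mult_fun (wconv W F G).
Proof.
move=> hW [F1 FM] [G1 GM]; split.
  rewrite /wconv; have -> : divisors 1 = [:: 1%N] by [].
  by rewrite big_seq1 divn1 F1 G1 hW // coprime1n !mul1r.
move=> a b a0 b0 cab; have ab0 : (0 < a * b)%N by rewrite muln_gt0 a0.
rewrite /wconv (perm_big _ (div_allpairs a0 b0 cab)) big_allpairs_dep /=.
rewrite big_distrl /=; apply: eq_big_seq => d1; rewrite -dvdn_divisors // => h1.
rewrite big_distrr /=; apply: eq_big_seq => d2; rewrite -dvdn_divisors // => h2.
have d10 : (0 < d1)%N := dvdn_gt0 a0 h1.
have d20 : (0 < d2)%N := dvdn_gt0 b0 h2.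
set a' := (a %/ d1)%N; set b' := (b %/ d2)%N.
have ea : (a' * d1)%N = a by rewrite divnK.
have eb : (b' * d2)%N = b by rewrite divnK.
have a'0 : (0 < a')%N by move: a0; rewrite -ea muln_gt0 => /andP[].
have b'0 : (0 < b')%N by move: b0; rewrite -eb muln_gt0 => /andP[].
have ha' : (a' %| a)%N by rewrite -ea dvdn_mulr.
have hb' : (b' %| b)%N by rewrite -eb dvdn_mulr.
have e : ((a * b) %/ (d1 * d2))%N = (a' * b')%N.
  by rewrite -ea -eb mulnACA mulnK // muln_gt0 d10.
rewrite e.
have cd : coprime d1 d2 by apply: (coprime_dvdl h1); apply: (coprime_dvdr h2).
have cab' : coprime a' b' by apply: (coprime_dvdl ha'); apply: (coprime_dvdr hb').
have c1 : coprime d1 b' by apply: (coprime_dvdl h1); apply: (coprime_dvdr hb').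
have c2 : coprime d2 a'.
  by rewrite coprime_sym; apply: (coprime_dvdl ha'); apply: (coprime_dvdr h2).
rewrite FM // GM // !hW ?muln_gt0 ?d10 ?a'0 //.
rewrite coprimeMl !coprimeMr c1 c2 !andbT.
by case: (coprime d1 a'); case: (coprime d2 b'); rewrite /= ?mulr0 ?mul0r // !mulr1 mulrACA.
Qed.

Lemma conv_pp (C : numClosedFieldType) (W : nat -> nat -> C) (F G : nat -> C) p k :
  (forall a b : nat, (0 < a)%N -> (0 < b)%N -> W a b = (if coprime a b then 1 else 0)) ->
  mult_fun F -> mult_fun G -> prime p -> (0 < k)%N ->
  wconv W F G (p ^ k)%N = F (p ^ k)%N + G (p ^ k)%N.
Proof.
move=> hW [F1 FM] [G1 GM] pp k0.
have p1 : (1 < p)%N := prime_gt1 pp.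
have pk0 : (0 < p ^ k)%N by rewrite expn_gt0 ltnW.
have pk1 : (p ^ k != 1)%N by rewrite -(expn0 p) eqn_exp2l //; lia.
rewrite /wconv (sum_two (x1:=1%N) (x2:=(p ^ k)%N)) ?divisors_uniq ?divisor1 ?divisors_id //.
- rewrite divn1 divnn pk0 F1 G1 !hW // coprime1n coprimen1 !mul1r !mulr1 addrC //.
- by rewrite eq_sym.
move=> y; rewrite -dvdn_divisors // => /(dvdn_pfactor _ _ pp)[j jk ->] y1 yk.
have j0 : (0 < j)%N by case: j y1 {jk yk} => //; rewrite expn0 eqxx.
have jk' : (j < k)%N by rewrite ltn_neqAle jk andbT; apply: contraNneq yk => ->.
have p0 : (0 < p)%N by apply: ltnW.
have e : (p ^ k %/ p ^ j = p ^ (k - j))%N by rewrite expnB // ltnW.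
have kj : (0 < k - j)%N by rewrite subn_gt0.
rewrite e hW; [|by rewrite expn_gt0 p0|by rewrite expn_gt0 p0].
rewrite (coprime_pexpl _ _ j0) (coprime_pexpr _ _ kj) /coprime gcdnn.
by rewrite (gtn_eqF p1) mulr0.
Qed.

Lemma pk_neq1 p k : prime p -> (0 < k)%N -> (p ^ k != 1)%N.
Proof.
move=> pp k0; have p1 : (1 < p)%N := prime_gt1 pp.
by rewrite -(expn0 p) eqn_exp2l //; lia.
Qed.

Lemma backward (C : numClosedFieldType) (W : nat -> nat -> C) :
  (forall a b : nat, (0 < a)%N -> (0 < b)%N -> W a b = (if coprime a b then 1 else 0)) ->
  is_comm_ring (@mult_fun C) (wconv W) (@pmul C).
Proof.
move=> hW.
have CM : forall F G, mult_fun F -> mult_fun G -> mult_fun (wconv W F G).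
  by move=> F G; apply: conv_mult.
split; first exact: CM.
split; first exact: pmul_mult.
split.
  move=> F G H hF hG hH.
  have hGH := CM _ _ hG hH; have hFG := CM _ _ hF hG.
  apply: mult_ext; [exact: CM | exact: CM |].
  by move=> p k pp k0; rewrite !conv_pp // addrA.
split.
  move=> F G hF hG; apply: mult_ext; [exact: CM | exact: CM |].
  by move=> p k pp k0; rewrite !conv_pp // addrC.
split.
  exists (eps_f C); split; first exact: eps_mult.
  split.
    move=> F hF; apply: mult_ext => //; first by apply: CM => //; exact: eps_mult.
    move=> p k pp k0; rewrite conv_pp //; last exact: eps_mult.
    by rewrite /eps_f (negbTE (pk_neq1 pp k0)) add0r.
  move=> F hF; exists (pmul F (sgnf C)); split; first by apply: pmul_mult => //; exact: sgn_mult.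
  have hG : mult_fun (pmul F (sgnf C)) by apply: pmul_mult => //; exact: sgn_mult.
  apply: mult_ext; [exact: CM | exact: eps_mult |].
  move=> p k pp k0; rewrite conv_pp // /pmul sgn_pp // /eps_f (negbTE (pk_neq1 pp k0)).
  by rewrite mulrN1 subrr.
split; first by move=> F G H _ _ _ m _; rewrite /pmul mulrA.
split; first by move=> F G _ _ m _; rewrite /pmul mulrC.
split; first by exists (one_f C); split; [exact: one_mult | move=> F _ m _; rewrite /pmul /one_f mul1r].
move=> F G H hF hG hH.
have hFG := pmul_mult hF hG; have hFH := pmul_mult hF hH.
apply: mult_ext; [by apply: pmul_mult => //; exact: CM | exact: CM |].
move=> p k pp k0; rewrite [LHS]/pmul !conv_pp //.
by rewrite /pmul mulrDr.
Qed.

Unset Implicit Arguments.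
Set Strict Implicit.

Theorem mainTheorem11 (C : numClosedFieldType) (W : nat -> nat -> C) :
  is_comm_ring (@mult_fun C) (wconv W) (@pmul C) <->
  (forall a b : nat, (0 < a)%N -> (0 < b)%N ->
     W a b = (if coprime a b then 1 else 0)).
Proof. split; [exact: forward | exact: backward]. Qed.
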